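(* Let $c>0$, $f_s>0$, let $M,N,K\ge1$ be integers, $T_{\max}=(N-1)/f_s$, $\bm{r}^{\mathrm{mic}}_1,\dots,\bm{r}^{\mathrm{mic}}_M\in\mathbb{R}^3$ with $E_M=\{\bm{r}^{\mathrm{mic}}_m\}$, $\bm{x}\in\mathbb{R}^{MN}$. Let $\kappa$ be continuous with $\kappa(0)>0$ and $\lim_{|t|\to\infty}\kappa(t)=0$, and assume $\Gamma^K$ is amplitude lower-bounded. Let $(\bm{a}^l,\bm{r}^l)_{l}$ be a minimizing sequence in $\mathbb{R}_+^K\times\mathscr{C}^K$ for $\inf_{\mathbb{R}_+^K\times\mathscr{C}^K}T$, where $T(\bm{a},\bm{r})=\frac12\|\bm{x}-\sum_{k=1}^K a_k\gamma(\bm{r}_k)\|_2^2$. Then, up to extracting a subsequence, for each $k\in\{1,\dots,K\}$ one of the following holds: (i) there exist $\bm{r}_k\in\mathscr{C}$ and $a_k\in\mathbb{R}_+$ with $\bm{r}^l_k\to\bm{r}_k$ and $a^l_k\to a_k$ as $l\to\infty$; (ii) there exist $m_k\in\{1,\dots,M\}$ and $\widetilde a_k\in\mathbb{R}_+$ with $\bm{r}^l_k\to\bm{r}^{\mathrm{mic}}_{m_k}$, $a^l_k\to0$, and $\dfrac{a^l_k}{4\pi\|\bm{r}^l_k-\bm{r}^{\mathrm{mic}}_{m_k}\|_2}\to\widetilde a_k$ as $l\to\infty$.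
   Context: $\mathbb{R}_+=[0,+\infty)$, $\|\cdot\|_2$ Euclidean norm, $\bm{x}=(x_{m,n})_{1\le m\le M,0\le n\le N-1}$. For $\bm{r}\in\mathbb{R}^3\setminus E_M$, $\gamma_{m,n}(\bm{r})=\dfrac{\kappa\big(n/f_s-\|\bm{r}-\bm{r}^{\mathrm{mic}}_m\|_2/c\big)}{4\pi\|\bm{r}-\bm{r}^{\mathrm{mic}}_m\|_2}$. $\mathscr{C}=\bigcap_{m=1}^M\overline{B(\bm{r}^{\mathrm{mic}}_m,cT_{\max})}\setminus E_M$. $\Gamma^K(\bm{a},\bm{r})=\sum_k a_k\gamma(\bm{r}_k)$; it is amplitude lower-bounded if there is $C>0$ with $\|\Gamma^K(\bm{a},\bm{r})\|_2\ge C\sum_k a_k$ for all $(\bm{a},\bm{r})\in\mathbb{R}_+^K\times\mathscr{C}^K$. *)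

(* Defs.v *)
From HB Require Import structures.
From mathcomp Require Import all_boot all_order all_algebra.
From mathcomp Require Import all_classical all_reals all_analysis.
Set Implicit Arguments. Unset Strict Implicit. Unset Printing Implicit Defensive.
Import Order.TTheory GRing.Theory Num.Theory.
Import numFieldNormedType.Exports.
Local Open Scope ring_scope.

Section Defs.
Variable R : realType.

Definition enorm (n : nat) (v : 'rV[R]_n) : R :=
  Num.sqrt (\sum_(i < n) (v ord0 i) ^+ 2).

(* Euclidean norm of x = (x_{m,n}) in R^{MN} (Frobenius norm of the M x N array) *)
Definition frob (M N : nat) (A : 'M[R]_(M, N)) : R :=
  Num.sqrt (\sum_(i < M) \sum_(j < N) (A i j) ^+ 2).

Variables (kappa : R -> R) (c fs : R) (M N : nat) (rmic : 'I_M -> 'rV[R]_3).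

Definition Tmax : R := (N.-1)%:R / fs.

(* gamma(r) in R^{MN}; index m : 'I_M stands for m+1 in {1..M}, n : 'I_N for n in {0..N-1} *)
Definition gamma (r : 'rV[R]_3) : 'M[R]_(M, N) :=
  \matrix_(m < M, n < N)
    (kappa (n%:R / fs - enorm (r - rmic m) / c) / (4 * pi * enorm (r - rmic m))).

Definition inC (r : 'rV[R]_3) : Prop :=
  (forall m : 'I_M, enorm (r - rmic m) <= c * Tmax) /\ (forall m : 'I_M, r <> rmic m).

Variable K : nat.

Definition Gamma (a : 'I_K -> R) (r : 'I_K -> 'rV[R]_3) : 'M[R]_(M, N) :=
  \sum_(k < K) a k *: gamma (r k).

Definition in_dom (a : 'I_K -> R) (r : 'I_K -> 'rV[R]_3) : Prop :=
  (forall k, 0 <= a k) /\ (forall k, inC (r k)).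

Definition amplitude_lower_bounded : Prop :=
  exists C0 : R, 0 < C0 /\
    forall a r, in_dom a r -> C0 * (\sum_(k < K) a k) <= frob (Gamma a r).

Variable x : 'M[R]_(M, N).

Definition Tobj (a : 'I_K -> R) (r : 'I_K -> 'rV[R]_3) : R :=
  2^-1 * (frob (x - Gamma a r)) ^+ 2.

Definition infT : R := inf [set t : R | exists a r, in_dom a r /\ t = Tobj a r]%classic.
End Defs.

(* Main.v *)
Require Import Defs.
From HB Require Import structures.
From mathcomp Require Import all_boot all_order all_algebra.
From mathcomp Require Import all_classical all_reals all_analysis.
From mathcomp Require Import ring lra.
Import Order.TTheory GRing.Theory Num.Theory.
Import numFieldNormedType.Exports.
Local Open Scope classical_set_scope.
Local Open Scope ring_scope.
Lemma sincr_mono (phi : nat -> nat) : (forall n, phi n < phi n.+1)%N ->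
  forall m n, (m < n)%N -> (phi m < phi n)%N.
Proof. move=> h; exact: (@homo_ltn _ phi (fun a b => a < b)%N (fun y x z => @ltn_trans y x z) h). Qed.

Lemma sincr_ge (phi : nat -> nat) : (forall n, phi n < phi n.+1)%N ->
  forall n, (n <= phi n)%N.
Proof. move=> h; elim=> [//|n IH]; exact: leq_ltn_trans IH (h n). Qed.

Lemma subseq_cvg {T : topologicalType} (u : nat -> T) (psi : nat -> nat) (l : T) :
  (forall n, psi n < psi n.+1)%N -> u n @[n --> \oo] --> l ->
  (u \o psi) n @[n --> \oo] --> l.
Proof.
move=> h ul; apply: cvg_comp ul.
move=> A [N _ NA]; exists N => // n /= Nn; apply: NA => /=.
apply: (leq_trans Nn); exact: sincr_ge.
Qed.

Lemma BW_list (R : realType) (I : eqType) (s : seq I) (u : I -> nat -> R) (B : R) :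
  (forall i l, `|u i l| <= B) ->
  exists phi : nat -> nat, (forall n, phi n < phi n.+1)%N /\
    forall i, i \in s -> cvgn (u i \o phi).
Proof.
move=> uB; elim: s => [|i s [phi [phiI phic]]].
  by exists id; split => // i.
have bnd : bounded_fun (u i \o phi).
  exists B; split; first by rewrite num_real.
  by move=> M BM x _; apply: le_trans (ltW BM); apply: uB.
have [f /increasing_seqP fI0 fc] := bolzano_weierstrass bnd.
have fI : forall n, (f n < f n.+1)%N by exact: fI0.
exists (phi \o f); split.
  by move=> n /=; apply: sincr_mono => //; exact: fI.
move=> j; rewrite inE => /orP[/eqP->|js]; first by [].
have /cvg_ex[L HL] := phic j js.
apply/cvg_ex; exists L.
exact: (@subseq_cvg _ _ f L fI HL).
Qed.

Lemma cvg_rV (R : realType) n (u : nat -> 'rV[R]_n) (v : 'rV[R]_n) :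
  (forall j, u l ord0 j @[l --> \oo] --> v ord0 j) -> u l @[l --> \oo] --> v.
Proof.
move=> h; apply/cvg_ballP => e e0.
have H : forall j, \forall l \near \oo, ball (v ord0 j) e (u l ord0 j).
  by move=> j; move/cvg_ballP : (h j) => /(_ e e0).
have : \forall l \near \oo, forall j, ball (v ord0 j) e (u l ord0 j) by exact: filter_forall.
apply: filterS => l Hl.
split => // i j; by rewrite (ord1 i).
Qed.

Section H.
Variable R : realType.

Lemma le_sum_one (I : finType) (F : I -> R) i0 : (forall i, 0 <= F i) -> F i0 <= \sum_i F i.
Proof. by move=> h; rewrite (bigD1 i0) //= lerDl sumr_ge0. Qed.

Lemma entry_le_enorm n (v : 'rV[R]_n) j : `|v ord0 j| <= enorm v.
Proof.
rewrite /enorm -sqrtr_sqr ler_sqrt; last by apply: sumr_ge0 => i _; exact: sqr_ge0.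
by apply: (@le_sum_one _ (fun i => v ord0 i ^+ 2)) => i; exact: sqr_ge0.
Qed.

Lemma entry_le_frob m n (A : 'M[R]_(m, n)) i j : `|A i j| <= frob A.
Proof.
rewrite /frob -sqrtr_sqr ler_sqrt; last first.
  by apply: sumr_ge0 => i' _; apply: sumr_ge0 => j' _; exact: sqr_ge0.
apply: le_trans (@le_sum_one _ (fun i => \sum_(j < n) A i j ^+ 2) i _).
  by apply: (@le_sum_one _ (fun j => A i j ^+ 2)) => j'; exact: sqr_ge0.
by move=> i'; apply: sumr_ge0 => j' _; exact: sqr_ge0.
Qed.

Lemma enorm_ge0 n (v : 'rV[R]_n) : 0 <= enorm v.
Proof. exact: sqrtr_ge0. Qed.

Lemma frob_ge0 m n (A : 'M[R]_(m, n)) : 0 <= frob A.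
Proof. exact: sqrtr_ge0. Qed.

Lemma enorm0 n : enorm (0 : 'rV[R]_n) = 0.
Proof. by rewrite /enorm big1 ?sqrtr0 // => i _; rewrite mxE expr0n. Qed.

Lemma enorm_eq0 n (v : 'rV[R]_n) : enorm v = 0 -> v = 0.
Proof.
move=> /eqP; rewrite /enorm sqrtr_eq0 => h.
have h0 : \sum_(i < n) v ord0 i ^+ 2 = 0.
  by apply/eqP; rewrite eq_le h sumr_ge0 // => i _; exact: sqr_ge0.
apply/matrixP => i j; rewrite (ord1 i) mxE.
have := psumr_eq0P (P := predT) (F := fun i => v ord0 i ^+ 2) _ h0 (i := j).
by move=> /(_ (fun i _ => sqr_ge0 _) isT) /eqP; rewrite sqrf_eq0 => /eqP.
Qed.

Lemma sqrt_bound (y b : R) : 0 <= y -> y ^+ 2 <= b -> y <= 1 + b.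
Proof. move=> y0 yb; nra. Qed.

Lemma frob_bound m n (A : 'M[R]_(m, n)) E : (forall i j, `|A i j| <= E) ->
  frob A <= 1 + \sum_(i < m) \sum_(j < n) E ^+ 2.
Proof.
move=> h; apply: sqrt_bound; first exact: frob_ge0.
rewrite /frob sqr_sqrtr; last first.
  by apply: sumr_ge0 => i' _; apply: sumr_ge0 => j' _; exact: sqr_ge0.
apply: ler_sum => i _; apply: ler_sum => j _.
by have := h i j; rewrite ler_norml => /andP[h1 h2]; nra.
Qed.

Lemma cvg_sum_seq (I : Type) (s : seq I) (P : pred I) (f : I -> nat -> R) (g : I -> R) :
  (forall i, f i l @[l --> \oo] --> g i) ->
  \sum_(i <- s | P i) f i l @[l --> \oo] --> \sum_(i <- s | P i) g i.
Proof.
move=> h; elim: s => [|x s IH].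
  rewrite big_nil.
  have -> : (fun l => \sum_(i <- [::] | P i) f i l) = (fun=> 0) by apply/funext => l; rewrite big_nil.
  exact: cvg_cst.
rewrite big_cons.
have -> : (fun l => \sum_(i <- x :: s | P i) f i l) =
   (fun l => if P x then f x l + \sum_(i <- s | P i) f i l else \sum_(i <- s | P i) f i l).
  by apply/funext => l; rewrite big_cons.
case: (P x) => //; exact: cvgD.
Qed.

Lemma enorm_cvg n (u : nat -> 'rV[R]_n) (v : 'rV[R]_n) :
  u l @[l --> \oo] --> v -> enorm (u l) @[l --> \oo] --> enorm v.
Proof.
move=> uv; rewrite /enorm.
apply: (cvg_comp (fun l => \sum_(i < n) u l ord0 i ^+ 2)); last exact: sqrt_continuous.
apply: cvg_sum_seq => i.
have hi : u l ord0 i @[l --> \oo] --> v ord0 i.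
  by apply: (cvg_comp u (fun M : 'rV[R]_n => M ord0 i) uv); exact: coord_continuous.
exact: (cvgM hi hi).
Qed.

Lemma ge_lim (u : nat -> R) (l b : R) : u n @[n --> \oo] --> l -> (forall n, b <= u n) -> b <= l.
Proof. move=> ul h; apply: (cvgr_to_ge ul); near=> n; exact: h. Unshelve. all: by end_near. Qed.

Lemma le_lim (u : nat -> R) (l b : R) : u n @[n --> \oo] --> l -> (forall n, u n <= b) -> l <= b.
Proof. move=> ul h; apply: (cvgr_to_le ul); near=> n; exact: h. Unshelve. all: by end_near. Qed.

End H.

Theorem lemma1 (R : realType) (c fs : R) (M N K : nat)
  (rmic : 'I_M -> 'rV[R]_3) (x : 'M[R]_(M, N)) (kappa : R -> R)
  (a_seq : nat -> 'I_K -> R) (r_seq : nat -> 'I_K -> 'rV[R]_3) :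
  0 < c -> 0 < fs -> (1 <= M)%N -> (1 <= N)%N -> (1 <= K)%N ->
  continuous kappa -> 0 < kappa 0 ->
  kappa t @[t --> +oo] --> 0 -> kappa t @[t --> -oo] --> 0 ->
  amplitude_lower_bounded kappa c fs N rmic K ->
  (forall l, in_dom c fs N rmic (a_seq l) (r_seq l)) ->
  Tobj kappa c fs rmic x (a_seq l) (r_seq l) @[l --> \oo] --> infT kappa c fs rmic K x ->
  exists phi : nat -> nat, (forall l, (phi l < phi l.+1)%N) /\
    forall k : 'I_K,
      (exists (rk : 'rV[R]_3) (ak : R),
          inC c fs N rmic rk /\ 0 <= ak /\
          r_seq (phi l) k @[l --> \oo] --> rk /\
          a_seq (phi l) k @[l --> \oo] --> ak)
      \/
      (exists (mk : 'I_M) (atk : R),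
          0 <= atk /\
          r_seq (phi l) k @[l --> \oo] --> rmic mk /\
          a_seq (phi l) k @[l --> \oo] --> 0 /\
          a_seq (phi l) k / (4 * pi * enorm (r_seq (phi l) k - rmic mk)) @[l --> \oo] --> atk).
Proof.
move=> c0 fs0 M1 N1 K1 kc k0 _ _ [C0 [C00 Hlb]] Hdom HT.
pose m0 : 'I_M := Ordinal M1.
pose n0 : 'I_N := Ordinal N1.
pose k1 : 'I_K := Ordinal K1.
pose G l := Gamma kappa c fs N rmic (a_seq l) (r_seq l).
have Ha0 l k : 0 <= a_seq l k by exact: (Hdom l).1.
have HrB l k m : enorm (r_seq l k - rmic m) <= c * Tmax fs N by exact: ((Hdom l).2 k).1.
have Hrn l k m : r_seq l k <> rmic m by exact: ((Hdom l).2 k).2.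
have [BT HBT] : exists BT, forall l, Tobj kappa c fs rmic x (a_seq l) (r_seq l) <= BT.
  have hc : cvgn (fun l => Tobj kappa c fs rmic x (a_seq l) (r_seq l)).
    by apply/cvg_ex; eexists; exact: HT.
  have [B0 [_ HB]] := cvg_seq_bounded hc.
  exists (B0 + 1) => l; apply: le_trans (ler_norm _) _.
  by apply: (HB (B0 + 1)) => //; rewrite ltrDl.
pose FB := 1 + 2 * BT.
have HFB l : frob (x - G l) <= FB.
  apply: sqrt_bound; first exact: frob_ge0.
  by have := HBT l; rewrite /Tobj -/(G l); lra.
pose Eb := frob x + FB.
have HEb l i j : `|G l i j| <= Eb.
  have -> : G l i j = x i j - (x - G l) i j by rewrite !mxE; ring.
  apply: le_trans (ler_normB _ _) _.
  by apply: lerD; [exact: entry_le_frob | apply: le_trans (HFB l); exact: entry_le_frob].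
pose GB := 1 + \sum_(i < M) \sum_(j < N) Eb ^+ 2.
have HGB l : frob (G l) <= GB by exact: frob_bound.
pose Sa := GB / C0.
have HSa l k : a_seq l k <= Sa.
  have h1 := Hlb (a_seq l) (r_seq l) (Hdom l).
  have h2 : a_seq l k <= \sum_(k0 < K) a_seq l k0 by apply: le_sum_one.
  rewrite /Sa ler_pdivlMr //.
  have := HGB l; rewrite /G => h3. nra.
pose p := rmic m0.
pose cT := c * Tmax fs N.
have HrE l k j : `|r_seq l k ord0 j| <= cT + enorm p.
  have -> : r_seq l k ord0 j = (r_seq l k - p) ord0 j + p ord0 j by rewrite !mxE; ring.
  apply: le_trans (ler_normD _ _) _.
  apply: lerD; last exact: entry_le_enorm.
  apply: le_trans (HrB l k m0); exact: entry_le_enorm.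
pose I := ('I_K * option 'I_3)%type.
pose u (i : I) (l : nat) := match i.2 with None => a_seq l i.1 | Some j => r_seq l i.1 ord0 j end.
have hB : forall i l, `|u i l| <= `|Sa| + `|cT + enorm p|.
  move=> [k [j|]] l; rewrite /u /=.
    apply: le_trans (HrE l k j) _; by apply: le_trans (ler_norm _) _; rewrite lerDr.
  apply: le_trans (_ : `|Sa| <= _); last by rewrite lerDl.
  rewrite (ger0_norm (Ha0 l k)).
  exact: (le_trans (HSa l k) (ler_norm Sa)).
have [phi1 [phi1I Hc]] := @BW_list R _ (enum [set: I]) u _ hB.
pose ak k := lim ((u (k, None) \o phi1) @ \oo).
pose rk k := \row_j lim ((u (k, Some j) \o phi1) @ \oo).
have Ha k : a_seq (phi1 l) k @[l --> \oo] --> ak k.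
  by have := Hc (k, None); rewrite mem_enum in_setT => /(_ isT).
have Hr k : r_seq (phi1 l) k @[l --> \oo] --> rk k.
  apply: cvg_rV => j; rewrite mxE.
  by have := Hc (k, Some j); rewrite mem_enum in_setT => /(_ isT).
have k02 : 0 < kappa 0 / 2 by rewrite divr_gt0.
have [eta eta0 Heta] : exists2 eta, 0 < eta &
    forall d, 0 <= d -> d < eta -> kappa 0 / 2 <= kappa (- (d / c)).
  have hn : \forall t \near 0, `|kappa 0 - kappa t| < kappa 0 / 2.
    exact: (cvgr_dist_lt kappa (kappa 0) (kc 0) _ k02).
  have [e e0 He] := iffLR (nbhs_ballP _ _) hn.
  exists (e * c); first by rewrite mulr_gt0.
  move=> d d0 de.
  have : ball 0 e (- (d / c)).
    rewrite -ball_normE /ball_ /= sub0r opprK ger0_norm ?divr_ge0 ?(ltW c0) //.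
    by rewrite ltr_pdivrMr.
  move=> /He /= h.
  move: h; rewrite ltr_norml => /andP[h1 h2]; lra.
have Tm0 : 0 <= Tmax fs N by rewrite /Tmax divr_ge0 ?(ltW fs0).
have [Kb HKb] : exists Kb, forall t, - Tmax fs N <= t -> t <= 0 -> `|kappa t| <= Kb.
  have hc : {within `[- Tmax fs N, 0], continuous (fun t => `|kappa t|)}.
    apply: continuous_subspaceT => t.
    exact: (continuous_comp (kc t) (@norm_continuous _ _ (kappa t))).
  have hT : - Tmax fs N <= 0 by rewrite oppr_le0.
  have [t0 _ Ht0] := EVT_max hT hc.
  by exists `|kappa t0| => t h1 h2; apply: Ht0; rewrite in_itv /= h1 h2.
have Kb0 : 0 <= Kb.
  by apply: le_trans (normr_ge0 (kappa 0)) (HKb 0 _ _); rewrite ?oppr_le0.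
have Sa0 : 0 <= Sa := le_trans (Ha0 0%N k1) (HSa 0%N k1).
have pi0 := pi_gt0 R.
have peta : 0 < 4 * pi * eta by rewrite !mulr_gt0.
pose X := Sa * Kb / (4 * pi * eta).
have X0 : 0 <= X by apply: divr_ge0; [exact: mulr_ge0 | exact: ltW].
pose Bb := Num.max (Sa / (4 * pi * eta)) (2 / kappa 0 * (Eb + X *+ K)).
have Hd l k m : 0 < enorm (r_seq l k - rmic m).
  rewrite lt_neqAle enorm_ge0 andbT eq_sym; apply/eqP => /enorm_eq0 /eqP.
  by rewrite subr_eq0 => /eqP; exact: Hrn.
have Hb l k m : 0 <= a_seq l k / (4 * pi * enorm (r_seq l k - rmic m)) <= Bb.
  set d := enorm _.
  have D0 : 0 < 4 * pi * d by rewrite !mulr_gt0 // Hd.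
  apply/andP; split; first by rewrite divr_ge0 // ltW.
  have [deta|detal] := leP eta d.
    rewrite le_max; apply/orP; left.
    apply: ler_pM; [exact: Ha0 | by rewrite invr_ge0 ltW | exact: HSa | ].
    rewrite lef_pV2 ?posrE //.
    by apply: ler_wpM2l => //; rewrite mulr_ge0 // ltW.
  pose T j := a_seq l j * gamma kappa c fs N rmic (r_seq l j) m n0.
  have HG : G l m n0 = \sum_j T j.
    by rewrite /G /Gamma summxE; apply: eq_bigr => j _; rewrite mxE.
  have HTj j : - X <= T j.
    rewrite /T /gamma mxE /= ?mulr0n mul0r sub0r.
    set dj := enorm (r_seq l j - rmic m).
    have Dj : 0 < 4 * pi * dj by rewrite !mulr_gt0 // Hd.
    have [hj|hj] := ltP dj eta.
      apply: le_trans (_ : 0 <= _); first by rewrite oppr_le0.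
      apply: mulr_ge0 => //; apply: divr_ge0; last exact: ltW.
      exact: le_trans (ltW k02) (Heta dj (enorm_ge0 _ _ _) hj).
    have hk : `|kappa (- (dj / c))| <= Kb.
      apply: HKb; last by rewrite oppr_le0 divr_ge0 ?enorm_ge0 // ltW.
      by rewrite lerN2 ler_pdivrMr // mulrC; exact: HrB.
    have : `|a_seq l j * (kappa (- (dj / c)) / (4 * pi * dj))| <= X.
      have Di : 0 <= (4 * pi * dj)^-1 by rewrite invr_ge0 ltW.
      rewrite normrM (ger0_norm (Ha0 l j)) normrM (ger0_norm Di).
      rewrite /X mulrA; apply: ler_pM.
      - by rewrite mulr_ge0.
      - by [].
      - by apply: ler_pM => //; exact: HSa.
      rewrite lef_pV2 ?posrE //.
      by apply: ler_wpM2l => //; rewrite mulr_ge0 // ltW.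
    by rewrite ler_norml => /andP[].
  have S1 : T k + X <= \sum_j (T j + X).
    by apply: (@le_sum_one R _ (fun j => T j + X) k) => j; have := HTj j; lra.
  rewrite big_split /= sumr_const card_ord -HG in S1.
  have S2 : G l m n0 <= Eb := le_trans (ler_norm _) (HEb l m n0).
  have S3 : kappa 0 / 2 * (a_seq l k / (4 * pi * d)) <= T k.
    rewrite /T /gamma mxE /= ?mulr0n mul0r sub0r -/d mulrCA.
    apply: ler_wpM2l; first exact: Ha0.
    apply: ler_wpM2r; first by rewrite invr_ge0 ltW.
    exact: Heta d (enorm_ge0 _ _ _) detal.
  rewrite le_max; apply/orP; right.
  set rho := a_seq l k / (4 * pi * d) in S3 *.
  have S4 : kappa 0 / 2 * rho <= Eb + X *+ K by lra.
  have E : rho = 2 / kappa 0 * (kappa 0 / 2 * rho) by field; rewrite gt_eqF.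
  by rewrite [X in X <= _]E; apply: ler_wpM2l => //; rewrite divr_ge0 // ltW.
have [mk Hmk] : {mk : 'I_K -> 'I_M & forall k, (exists m, rk k = rmic m) -> rk k = rmic (mk k)}.
  apply: (@choice _ _ (fun k mm => (exists m, rk k = rmic m) -> rk k = rmic mm)) => kk.
  case: (pselect (exists m, rk kk = rmic m)) => [[m1 hm]|nh].
    by exists m1.
  by exists m0.
pose b (k : 'I_K) l := a_seq (phi1 l) k / (4 * pi * enorm (r_seq (phi1 l) k - rmic (mk k))).
have hB2 : forall k l, `|b k l| <= Bb.
  move=> k l; have /andP[h1 h2] := Hb (phi1 l) k (mk k).
  by rewrite ger0_norm.
have [psi [psiI Hc2]] := @BW_list R _ (enum [set: 'I_K]) b _ hB2.
have Hc2' k : cvgn (b k \o psi) by apply: Hc2; rewrite mem_enum in_setT.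
exists (phi1 \o psi); split.
  by move=> l /=; apply: sincr_mono.
move=> k.
have Hak : a_seq ((phi1 \o psi) l) k @[l --> \oo] --> ak k.
  exact: (@subseq_cvg _ _ psi _ psiI (Ha k)).
have Hrk : r_seq ((phi1 \o psi) l) k @[l --> \oo] --> rk k.
  exact: (@subseq_cvg _ _ psi _ psiI (Hr k)).
case: (pselect (exists m, rk k = rmic m)) => [hm|nh].
  right; exists (mk k), (limn (b k \o psi)).
  have rkE := Hmk k hm.
  split.
    apply: (@ge_lim R _ _ _ (Hc2' k)) => l /=.
    by have /andP[] := Hb (phi1 (psi l)) k (mk k).
  split; first by rewrite -rkE.
  split; last exact: (Hc2' k).
  have hd : enorm (r_seq ((phi1 \o psi) l) k - rmic (mk k)) @[l --> \oo] --> 0.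
    have e0 : rk k - rmic (mk k) = 0 by rewrite rkE subrr.
    rewrite -(enorm0 R 3) -e0.
    apply: enorm_cvg; apply: cvgB; [exact: Hrk | exact: cvg_cst].
  have := cvgM (Hc2' k) (cvgM (cvg_cst (4 * pi)) hd).
  rewrite !mulr0.
  have -> : ((b k \o psi) \* ((fun=> 4 * pi) \* (fun l => enorm (r_seq ((phi1 \o psi) l) k - rmic (mk k))))) =
      (fun l => a_seq ((phi1 \o psi) l) k).
    apply/funext => l /=; rewrite /b divfK //.
    by rewrite gt_eqF // !mulr_gt0 // Hd.
  by move=> h; exact: h.
left; exists (rk k), (ak k).
split.
  split => m; last by move=> e; apply: nh; exists m.
  apply: (@le_lim R _ _ _ (@enorm_cvg R _ _ _ (cvgB Hrk (cvg_cst (rmic m))))) => l.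
  exact: HrB.
split; last by split.
apply: (@ge_lim R _ _ _ Hak) => l; exact: Ha0.
Qed.
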